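(* Let $W=(w_{ij})_{i,j=1}^m$ be symmetric with nonnegative entries, and let $\lambda\ge0$, $\sigma\ge0$, $c\in\mathbb{R}^m$. Define $$F(u)=\frac{\lambda}{2}\sum_{i,j=1}^m w_{ij}|u_i-u_j|+\langle u,c\rangle+\sigma\max_iu_i.$$ Then: 1. Duality: $$\min_{u\in\mathbb{R}^m_+}\Big(F(u)+\tfrac12\|u\|_2^2\Big)=-\min_{\substack{\alpha\in\mathbb{R}^{m\times m},\ \|\alpha\|_\infty\le1,\ \alpha_{ij}=-\alpha_{ji}}}\ \min_{v\in S_m}\ \frac12\Big\|P_{\mathbb{R}^m_+}\Big(-c-\tfrac{\lambda}{2}A\alpha-\sigma v\Big)\Big\|_2^2.$$ 2. If $(\alpha^*,v^* )$ attains the minimum on the right, then $u^*=P_{\mathbb{R}^m_+}\big(-c-\frac{\lambda}{2}A\alpha^*-\sigma v^*\big)$ is the unique minimizer of $F(u)+\frac12\|u\|_2^2$ over $\mathbb{R}^m_+$. 3. If $u^*\ne0$, then $u^*/\|u^*\|_2$ minimizes $F$ over $\{u\in\mathbb{R}^m_+:\|u\|_2\le1\}$. If $u^*=0$, then $0$ is such a minimizer.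
   Context: Notation used in the statement: - $(A\alpha)_i:=\sum_j w_{ij}(\alpha_{ij}-\alpha_{ji})$. - $\|\alpha\|_\infty=\max_{i,j}|\alpha_{ij}|$. - $P_{\mathbb{R}^m_+}$ is the Euclidean projection onto the nonnegative orthant (componentwise positive part). - $S_m=\{v\in\mathbb{R}^m: v_i\ge0,\ \sum_iv_i=1\}$ is the probability simplex. *)

(* Defs.v *)
(* classical reals. Vectors in R^m are functions nat -> R,
   only the entries with index < m are relevant (indices 0..m-1). *)
From Stdlib Require Import Reals Lra Lia.
Open Scope R_scope.

Fixpoint rsum (m : nat) (f : nat -> R) : R :=
  match m with
  | O => 0
  | S k => rsum k f + f k
  end.

Fixpoint vmax_aux (k : nat) (u : nat -> R) : R :=
  match k with
  | O => u O
  | S k' => Rmax (vmax_aux k' u) (u (S k'))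
  end.

(* max_{i < m} u_i  (meaningful for m >= 1) *)
Definition vmax (m : nat) (u : nat -> R) : R := vmax_aux (Nat.pred m) u.

Definition sqnorm (m : nat) (u : nat -> R) : R := rsum m (fun i => u i ^ 2).
Definition norm2 (m : nat) (u : nat -> R) : R := sqrt (sqnorm m u).

Definition nonneg_vec (m : nat) (u : nat -> R) : Prop :=
  forall i, (i < m)%nat -> 0 <= u i.

Definition simplex (m : nat) (v : nat -> R) : Prop :=
  nonneg_vec m v /\ rsum m v = 1.

Definition projpos (u : nat -> R) : nat -> R := fun i => Rmax (u i) 0.

Definition Aop (m : nat) (w : nat -> nat -> R) (a : nat -> nat -> R) : nat -> R :=
  fun i => rsum m (fun j => w i j * (a i j - a j i)).

Definition dual_feasible (m : nat) (a : nat -> nat -> R) : Prop :=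
  forall i j, (i < m)%nat -> (j < m)%nat ->
    Rabs (a i j) <= 1 /\ a i j = - a j i.

Definition Fobj (m : nat) (w : nat -> nat -> R) (lam sigma : R) (c : nat -> R)
  (u : nat -> R) : R :=
  lam / 2 * rsum m (fun i => rsum m (fun j => w i j * Rabs (u i - u j)))
  + rsum m (fun i => u i * c i) + sigma * vmax m u.

Definition Gobj (m : nat) (w : nat -> nat -> R) (lam sigma : R) (c : nat -> R)
  (u : nat -> R) : R :=
  Fobj m w lam sigma c u + / 2 * sqnorm m u.

Definition dual_point (m : nat) (w : nat -> nat -> R) (lam sigma : R) (c : nat -> R)
  (a : nat -> nat -> R) (v : nat -> R) : nat -> R :=
  projpos (fun i => - c i - lam / 2 * Aop m w a i - sigma * v i).

Definition Dobj (m : nat) (w : nat -> nat -> R) (lam sigma : R) (c : nat -> R)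
  (a : nat -> nat -> R) (v : nat -> R) : R :=
  / 2 * sqnorm m (dual_point m w lam sigma c a v).

Definition ball_min (m : nat) (w : nat -> nat -> R) (lam sigma : R) (c : nat -> R)
  (x : nat -> R) : Prop :=
  (nonneg_vec m x /\ norm2 m x <= 1) /\
  forall u, nonneg_vec m u -> norm2 m u <= 1 ->
    Fobj m w lam sigma c x <= Fobj m w lam sigma c u.

(* Main.v *)
Require Import Defs.
From Stdlib Require Import Reals.
Open Scope R_scope.
From Stdlib Require Import Lra Lia FunctionalExtensionality.

Lemma rsum_ext m f g : (forall i, (i < m)%nat -> f i = g i) -> rsum m f = rsum m g.
Proof.
  induction m; simpl; intros H; auto.
  rewrite IHm by (intros; apply H; lia). rewrite (H m) by lia. reflexivity.
Qed.

Lemma rsum_plus m f g : rsum m (fun i => f i + g i) = rsum m f + rsum m g.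
Proof. induction m; simpl; [lra| rewrite IHm; ring]. Qed.

Lemma rsum_minus m f g : rsum m (fun i => f i - g i) = rsum m f - rsum m g.
Proof. induction m; simpl; [lra| rewrite IHm; ring]. Qed.

Lemma rsum_scal m a f : rsum m (fun i => a * f i) = a * rsum m f.
Proof. induction m; simpl; [lra| rewrite IHm; ring]. Qed.

Lemma rsum_le m f g : (forall i, (i < m)%nat -> f i <= g i) -> rsum m f <= rsum m g.
Proof.
  induction m; simpl; intros H; [lra|].
  assert (rsum m f <= rsum m g) by (apply IHm; intros; apply H; lia).
  assert (f m <= g m) by (apply H; lia). lra.
Qed.

Lemma rsum_zero_f m : rsum m (fun _ => 0) = 0.
Proof. induction m; simpl; [lra| rewrite IHm; ring]. Qed.

Lemma rsum_nonneg m f : (forall i, (i < m)%nat -> 0 <= f i) -> 0 <= rsum m f.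
Proof.
  intros H. rewrite <- (rsum_zero_f m). apply rsum_le. auto.
Qed.

Lemma rsum_zero m f : (forall i, (i < m)%nat -> 0 <= f i) -> rsum m f <= 0 ->
  forall i, (i < m)%nat -> f i = 0.
Proof.
  induction m; simpl; intros H Hs i Hi; [lia|].
  assert (0 <= rsum m f) by (apply rsum_nonneg; intros; apply H; lia).
  assert (0 <= f m) by (apply H; lia).
  destruct (Nat.eq_dec i m) as [->|Hne]; [lra|].
  apply IHm; [intros; apply H; lia| lra| lia].
Qed.

Lemma rsum_ge_term m f k : (forall i, (i < m)%nat -> 0 <= f i) -> (k < m)%nat ->
  f k <= rsum m f.
Proof.
  induction m; simpl; intros H Hk; [lia|].
  assert (0 <= rsum m f) by (apply rsum_nonneg; intros; apply H; lia).
  assert (0 <= f m) by (apply H; lia).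
  destruct (Nat.eq_dec k m) as [->|Hne]; [lra|].
  assert (f k <= rsum m f) by (apply IHm; [intros; apply H; lia| lia]). lra.
Qed.

Lemma rsum_swap m n f :
  rsum m (fun i => rsum n (fun j => f i j)) = rsum n (fun j => rsum m (fun i => f i j)).
Proof.
  induction m; simpl.
  - symmetry. apply rsum_zero_f.
  - rewrite IHm. rewrite <- rsum_plus. reflexivity.
Qed.

Lemma rsum_delta m k a : (k < m)%nat ->
  rsum m (fun i => if Nat.eq_dec i k then a else 0) = a.
Proof.
  induction m; simpl; intros Hk; [lia|].
  destruct (Nat.eq_dec m k) as [->|Hne].
  - rewrite (rsum_ext k _ (fun _ => 0)). rewrite rsum_zero_f. ring.
    intros i Hi. destruct (Nat.eq_dec i k); [lia|auto].
  - rewrite IHm by lia. ring.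
Qed.

Lemma vmax_aux_ge n u i : (i <= n)%nat -> u i <= vmax_aux n u.
Proof.
  induction n; simpl; intros H.
  - replace i with 0%nat by lia. lra.
  - destruct (Nat.eq_dec i (S n)) as [->|Hne].
    + apply Rmax_r.
    + eapply Rle_trans; [apply IHn; lia| apply Rmax_l].
Qed.

Lemma vmax_aux_att n u : exists i, (i <= n)%nat /\ vmax_aux n u = u i.
Proof.
  induction n; simpl.
  - exists 0%nat; split; auto.
  - destruct IHn as [i [Hi He]]. unfold Rmax. destruct Rle_dec.
    + exists (S n); split; auto.
    + exists i; split; auto.
Qed.

Lemma vmax_aux_ext n u u' : (forall i, (i <= n)%nat -> u i = u' i) ->
  vmax_aux n u = vmax_aux n u'.
Proof.
  induction n; simpl; intros H.
  - apply H; lia.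
  - rewrite IHn by (intros; apply H; lia). rewrite (H (S n)) by lia. reflexivity.
Qed.

Lemma vmax_aux_scale n u t : 0 <= t ->
  vmax_aux n (fun i => t * u i) = t * vmax_aux n u.
Proof.
  induction n; simpl; intros H; auto.
  rewrite IHn by auto. apply RmaxRmult. auto.
Qed.

Lemma vmax_ge m u i : (i < m)%nat -> u i <= vmax m u.
Proof. intros. unfold vmax. apply vmax_aux_ge. lia. Qed.

Lemma vmax_att m u : (0 < m)%nat -> exists i, (i < m)%nat /\ vmax m u = u i.
Proof.
  intros Hm. unfold vmax. destruct (vmax_aux_att (Nat.pred m) u) as [i [Hi He]].
  exists i; split; auto; lia.
Qed.

Lemma vmax_ext m u u' : (0 < m)%nat -> (forall i, (i < m)%nat -> u i = u' i) ->
  vmax m u = vmax m u'.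
Proof. intros Hm H. unfold vmax. apply vmax_aux_ext. intros; apply H; lia. Qed.

Lemma vmax_scale m u t : 0 <= t -> vmax m (fun i => t * u i) = t * vmax m u.
Proof. intros. unfold vmax. apply vmax_aux_scale. auto. Qed.

Definition ip m (u g : nat -> R) := rsum m (fun i => u i * g i).
Definition gv m w lam sigma (c : nat -> R) a (v : nat -> R) : nat -> R :=
  fun i => c i + lam / 2 * Aop m w a i + sigma * v i.

Lemma ip_gv m w lam sigma c a v u :
  ip m u (gv m w lam sigma c a v) =
  ip m u c + lam / 2 * ip m u (Aop m w a) + sigma * ip m u v.
Proof.
  unfold ip, gv. rewrite <- !rsum_scal, <- !rsum_plus. apply rsum_ext; intros; ring.
Qed.

Lemma pair_id m w a u :
  (forall i j, (i < m)%nat -> (j < m)%nat -> w i j = w j i) ->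
  ip m u (Aop m w a) = rsum m (fun i => rsum m (fun j => w i j * a i j * (u i - u j))).
Proof.
  intros Hsym. unfold ip, Aop.
  transitivity (rsum m (fun i => rsum m (fun j => u i * w i j * a i j))
              - rsum m (fun i => rsum m (fun j => u i * w i j * a j i))).
  { rewrite <- rsum_minus. apply rsum_ext; intros i Hi.
    rewrite <- rsum_scal, <- rsum_minus. apply rsum_ext; intros; ring. }
  rewrite (rsum_swap m m (fun i j => u i * w i j * a j i)).
  assert (E : rsum m (fun j => rsum m (fun i => u i * w i j * a j i)) =
              rsum m (fun i => rsum m (fun j => u j * w i j * a i j))).
  { apply rsum_ext; intros i Hi. apply rsum_ext; intros j Hj. rewrite (Hsym j i) by auto. ring. }
  rewrite E. rewrite <- rsum_minus. apply rsum_ext; intros i Hi.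
  rewrite <- rsum_minus. apply rsum_ext; intros; ring.
Qed.

Lemma abs_bound a x : Rabs a <= 1 -> a * x <= Rabs x.
Proof.
  intros H. unfold Rabs in *. destruct (Rcase_abs a); destruct (Rcase_abs x); nra.
Qed.

Definition bdd m (a : nat -> nat -> R) :=
  forall i j, (i < m)%nat -> (j < m)%nat -> Rabs (a i j) <= 1.
Definition rsimp m (v : nat -> R) := nonneg_vec m v /\ rsum m v <= 1.

Lemma F_ge m w lam sigma c a v u :
  (0 < m)%nat ->
  (forall i j, (i < m)%nat -> (j < m)%nat -> w i j = w j i) ->
  (forall i j, (i < m)%nat -> (j < m)%nat -> 0 <= w i j) ->
  0 <= lam -> 0 <= sigma -> nonneg_vec m u -> bdd m a -> rsimp m v ->
  ip m u (gv m w lam sigma c a v) <= Fobj m w lam sigma c u.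
Proof.
  intros Hm Hsym Hwnn Hlam Hsig Hu Ha [Hv Hv1].
  rewrite ip_gv, pair_id by auto. unfold Fobj.
  assert (H1 : rsum m (fun i => rsum m (fun j => w i j * a i j * (u i - u j)))
             <= rsum m (fun i => rsum m (fun j => w i j * Rabs (u i - u j)))).
  { apply rsum_le; intros i Hi; apply rsum_le; intros j Hj.
    rewrite Rmult_assoc. apply Rmult_le_compat_l; auto. apply abs_bound; auto. }
  assert (H2 : ip m u v <= vmax m u).
  { unfold ip. apply Rle_trans with (rsum m (fun i => vmax m u * v i)).
    - apply rsum_le; intros i Hi. apply Rmult_le_compat_r; [apply Hv; auto|].
      apply vmax_ge; auto.
    - rewrite rsum_scal. assert (0 <= vmax m u).
      { apply Rle_trans with (u 0%nat); [apply Hu; auto| apply vmax_ge; auto]. }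
      nra. }
  assert (0 <= lam / 2) by lra.
  assert (lam / 2 * rsum m (fun i => rsum m (fun j => w i j * a i j * (u i - u j))) <=
          lam / 2 * rsum m (fun i => rsum m (fun j => w i j * Rabs (u i - u j))))
    by (apply Rmult_le_compat_l; auto).
  assert (sigma * ip m u v <= sigma * vmax m u) by (apply Rmult_le_compat_l; auto).
  unfold ip at 1. lra.
Qed.

Ltac nlt := repeat match goal with H: ~ _ < _ |- _ => apply Rnot_lt_le in H end.

Definition sgn (x : R) : R := if Rlt_dec 0 x then 1 else if Rlt_dec x 0 then -1 else 0.

Lemma sgn_abs x : Rabs (sgn x) <= 1.
Proof. unfold sgn; destruct Rlt_dec; [|destruct Rlt_dec]; unfold Rabs; destruct Rcase_abs; nlt; lra. Qed.

Lemma sgn_opp x : sgn (- x) = - sgn x.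
Proof. unfold sgn; destruct (Rlt_dec 0 x); destruct (Rlt_dec x 0); destruct (Rlt_dec 0 (-x));
  destruct (Rlt_dec (-x) 0); nlt; lra. Qed.

Lemma sgn_mul x : sgn x * x = Rabs x.
Proof. unfold sgn, Rabs; destruct (Rlt_dec 0 x); destruct (Rlt_dec x 0); destruct Rcase_abs; nlt; lra. Qed.

Lemma F_eq m w lam sigma c u :
  (0 < m)%nat ->
  (forall i j, (i < m)%nat -> (j < m)%nat -> w i j = w j i) ->
  exists a v, dual_feasible m a /\ simplex m v /\
    Fobj m w lam sigma c u = ip m u (gv m w lam sigma c a v).
Proof.
  intros Hm Hsym. destruct (vmax_att m u Hm) as [k [Hk Hvk]].
  exists (fun i j => sgn (u i - u j)), (fun i => if Nat.eq_dec i k then 1 else 0).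
  split; [|split].
  - intros i j Hi Hj. split; [apply sgn_abs|].
    replace (u j - u i) with (- (u i - u j)) by ring. rewrite sgn_opp. ring.
  - split; [intros i Hi; destruct Nat.eq_dec; lra| apply rsum_delta; auto].
  - rewrite ip_gv, pair_id by auto. unfold Fobj, ip.
    rewrite (rsum_ext m (fun i => u i * (if Nat.eq_dec i k then 1 else 0))
                        (fun i => if Nat.eq_dec i k then u k else 0)).
    2:{ intros i Hi. destruct Nat.eq_dec; [subst; ring| ring]. }
    rewrite rsum_delta by auto. rewrite Hvk.
    rewrite (rsum_ext m (fun i => rsum m (fun j => w i j * sgn (u i - u j) * (u i - u j)))
                        (fun i => rsum m (fun j => w i j * Rabs (u i - u j)))).
    2:{ intros i Hi. apply rsum_ext; intros j Hj. rewrite Rmult_assoc, sgn_mul. ring. }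
    ring.
Qed.

Lemma ptL u g : 0 <= u -> 0 <= u * g + / 2 * u ^ 2 + / 2 * Rmax (- g) 0 ^ 2.
Proof.
  intros. pose proof (pow2_ge_0 (u + g)). pose proof (pow2_ge_0 u).
  unfold Rmax; destruct Rle_dec as [h|h].
  - assert (0 <= u * g) by (apply Rmult_le_pos; lra). nra.
  - nra.
Qed.

Lemma ptL_eq u g : 0 <= u -> u * g + / 2 * u ^ 2 + / 2 * Rmax (- g) 0 ^ 2 = 0 ->
  u = Rmax (- g) 0.
Proof.
  intros Hu H. pose proof (pow2_ge_0 (u + g)). pose proof (pow2_ge_0 u).
  unfold Rmax in *; destruct Rle_dec as [h|h].
  - assert (0 <= u * g) by (apply Rmult_le_pos; lra). nra.
  - nra.
Qed.

Lemma ptL_at g : let p := Rmax (- g) 0 in p * g + / 2 * p ^ 2 + / 2 * p ^ 2 = 0.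
Proof. simpl. unfold Rmax; destruct Rle_dec; nra. Qed.

Lemma dp_eq m w lam sigma c a v i :
  dual_point m w lam sigma c a v i = Rmax (- gv m w lam sigma c a v i) 0.
Proof. unfold dual_point, projpos, gv. f_equal. ring. Qed.

Lemma Dobj_as m w lam sigma c a v :
  Dobj m w lam sigma c a v = / 2 * rsum m (fun i => Rmax (- gv m w lam sigma c a v i) 0 ^ 2).
Proof. unfold Dobj, sqnorm. f_equal. apply rsum_ext; intros. rewrite dp_eq. auto. Qed.

Lemma Lsum m u g :
  ip m u g + / 2 * sqnorm m u + / 2 * rsum m (fun i => Rmax (- g i) 0 ^ 2) =
  rsum m (fun i => u i * g i + / 2 * u i ^ 2 + / 2 * Rmax (- g i) 0 ^ 2).
Proof. unfold ip, sqnorm. rewrite <- !rsum_scal, <- !rsum_plus. apply rsum_ext; intros; ring. Qed.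

Lemma Lsum_nonneg m u g : nonneg_vec m u ->
  0 <= ip m u g + / 2 * sqnorm m u + / 2 * rsum m (fun i => Rmax (- g i) 0 ^ 2).
Proof. intros Hu. rewrite Lsum. apply rsum_nonneg. intros; apply ptL; auto. Qed.

Lemma Lsum_eq m u g : nonneg_vec m u ->
  ip m u g + / 2 * sqnorm m u + / 2 * rsum m (fun i => Rmax (- g i) 0 ^ 2) <= 0 ->
  forall i, (i < m)%nat -> u i = Rmax (- g i) 0.
Proof.
  intros Hu H i Hi. rewrite Lsum in H. apply ptL_eq; auto.
  apply (rsum_zero m (fun i => u i * g i + / 2 * u i ^ 2 + / 2 * Rmax (- g i) 0 ^ 2)); auto.
  intros; apply ptL; auto.
Qed.

Lemma Lsum_at m u g : (forall i, (i < m)%nat -> u i = Rmax (- g i) 0) ->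
  ip m u g + / 2 * sqnorm m u + / 2 * rsum m (fun i => Rmax (- g i) 0 ^ 2) = 0.
Proof.
  intros H. rewrite Lsum. transitivity (rsum m (fun _ => 0)); [|apply rsum_zero_f].
  apply rsum_ext; intros i Hi.
  rewrite H by auto. apply ptL_at.
Qed.

Lemma WD m w lam sigma c a v u :
  (0 < m)%nat ->
  (forall i j, (i < m)%nat -> (j < m)%nat -> w i j = w j i) ->
  (forall i j, (i < m)%nat -> (j < m)%nat -> 0 <= w i j) ->
  0 <= lam -> 0 <= sigma -> nonneg_vec m u -> bdd m a -> rsimp m v ->
  - Dobj m w lam sigma c a v <= Gobj m w lam sigma c u.
Proof.
  intros. pose proof (F_ge m w lam sigma c a v u) as HF.
  pose proof (Lsum_nonneg m u (gv m w lam sigma c a v)) as HL.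
  rewrite Dobj_as. unfold Gobj. specialize (HF H H0 H1 H2 H3 H4 H5 H6).
  specialize (HL H4). lra.
Qed.

Lemma Aop_lin m w a b t i :
  Aop m w (fun i j => a i j + t * (b i j - a i j)) i = Aop m w a i + t * (Aop m w b i - Aop m w a i).
Proof.
  unfold Aop. rewrite <- rsum_minus, <- rsum_scal, <- rsum_plus. apply rsum_ext; intros; ring.
Qed.

Lemma gv_lin m w lam sigma c a b v v' t i :
  gv m w lam sigma c (fun i j => a i j + t * (b i j - a i j)) (fun i => v i + t * (v' i - v i)) i =
  gv m w lam sigma c a v i + t * (gv m w lam sigma c b v' i - gv m w lam sigma c a v i).
Proof. unfold gv. rewrite Aop_lin. ring. Qed.

Lemma df_bdd m a : dual_feasible m a -> bdd m a.
Proof. intros H i j Hi Hj. apply (H i j Hi Hj). Qed.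

Lemma simp_rsimp m v : simplex m v -> rsimp m v.
Proof. intros [H1 H2]. split; auto; lra. Qed.

Lemma df_comb m a b t : 0 <= t <= 1 -> dual_feasible m a -> dual_feasible m b ->
  dual_feasible m (fun i j => a i j + t * (b i j - a i j)).
Proof.
  intros Ht Ha Hb i j Hi Hj. destruct (Ha i j Hi Hj) as [Ha1 Ha2].
  destruct (Hb i j Hi Hj) as [Hb1 Hb2]. split.
  - replace (a i j + t * (b i j - a i j)) with ((1 - t) * a i j + t * b i j) by ring.
    eapply Rle_trans; [apply Rabs_triang|]. rewrite !Rabs_mult.
    rewrite (Rabs_pos_eq (1 - t)) by lra. rewrite (Rabs_pos_eq t) by lra. nra.
  - rewrite Ha2, Hb2. ring.
Qed.

Lemma rsimp_comb m v v' t : 0 <= t <= 1 -> rsimp m v -> rsimp m v' ->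
  rsimp m (fun i => v i + t * (v' i - v i)).
Proof.
  intros Ht [Hv Hv1] [Hw Hw1]. split.
  - intros i Hi. specialize (Hv i Hi). specialize (Hw i Hi). nra.
  - rewrite rsum_plus, rsum_scal, rsum_minus. nra.
Qed.

Lemma pt_dir p d t : 0 <= t ->
  Rmax (p - t * d) 0 ^ 2 <= Rmax p 0 ^ 2 - 2 * t * d * Rmax p 0 + t ^ 2 * d ^ 2.
Proof.
  intros Ht. pose proof (pow2_ge_0 (p - t * d)).
  unfold Rmax. destruct (Rle_dec (p - t * d) 0) as [h1|h1]; destruct (Rle_dec p 0) as [h2|h2].
  - nra.
  - pose proof (pow2_ge_0 (p - t*d)). nra.
  - apply Rnot_le_lt in h1. nra.
  - apply Rnot_le_lt in h1. nra.
Qed.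

Lemma small_pos s K : 0 <= K -> (forall t, 0 < t <= 1 -> s <= t * K) -> s <= 0.
Proof.
  intros HK H. destruct (Rle_dec s 0) as [h|h]; auto. apply Rnot_le_lt in h.
  assert (Hsk : 0 < s + K) by lra.
  specialize (H (s / (s + K))).
  assert (0 < s / (s + K) <= 1).
  { split. apply Rdiv_lt_0_compat; lra. apply Rmult_le_reg_r with (s + K); auto.
    unfold Rdiv. rewrite Rmult_assoc, Rinv_l by lra. lra. }
  specialize (H H0). unfold Rdiv in H.
  assert (s * (s + K) <= s * / (s + K) * K * (s + K)) by (apply Rmult_le_compat_r; lra).
  replace (s * / (s + K) * K * (s + K)) with (s * K) in H1 by (field; lra). nra.
Qed.

Lemma saddle m w lam sigma c a0 v0 :
  (0 < m)%nat ->
  (forall i j, (i < m)%nat -> (j < m)%nat -> w i j = w j i) ->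
  (forall i j, (i < m)%nat -> (j < m)%nat -> 0 <= w i j) ->
  0 <= lam -> 0 <= sigma -> dual_feasible m a0 -> rsimp m v0 ->
  (forall a v, dual_feasible m a -> rsimp m v ->
     Dobj m w lam sigma c a0 v0 <= Dobj m w lam sigma c a v) ->
  Gobj m w lam sigma c (dual_point m w lam sigma c a0 v0) = - Dobj m w lam sigma c a0 v0.
Proof.
  intros Hm Hsym Hwnn Hlam Hsig Ha0 Hv0 Hmin.
  set (us := dual_point m w lam sigma c a0 v0).
  set (g := gv m w lam sigma c a0 v0).
  assert (Hus : forall i, us i = Rmax (- g i) 0) by (intros; unfold us, g; apply dp_eq).
  assert (Husnn : nonneg_vec m us) by (intros i Hi; rewrite Hus; apply Rmax_r).
  destruct (F_eq m w lam sigma c us Hm Hsym) as [a' [v' [Ha' [Hv' HF']]]].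
  set (g' := gv m w lam sigma c a' v').
  set (d := fun i => g' i - g i).
  assert (Hs : ip m us d <= 0).
  { apply (small_pos _ (/ 2 * rsum m (fun i => d i ^ 2)))
     ; [apply Rmult_le_pos; [lra| apply rsum_nonneg; intros; apply pow2_ge_0]|].
    intros t Ht.
    assert (Ht' : 0 <= t <= 1) by lra.
    specialize (Hmin _ _ (df_comb m a0 a' t Ht' Ha0 Ha') (rsimp_comb m v0 v' t Ht' Hv0 (simp_rsimp m v' Hv'))).
    rewrite !Dobj_as in Hmin.
    assert (E1 : rsum m (fun i => Rmax (- gv m w lam sigma c (fun i j => a0 i j + t * (a' i j - a0 i j))
                        (fun i => v0 i + t * (v' i - v0 i)) i) 0 ^ 2)
              <= rsum m (fun i => Rmax (- g i) 0 ^ 2 - 2 * t * (us i * d i) + t ^ 2 * d i ^ 2)).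
    { apply rsum_le; intros i Hi. rewrite gv_lin. fold g. fold (g' i) (g i).
      replace (- (g i + t * (g' i - g i))) with (- g i - t * d i) by (unfold d; ring).
      rewrite Hus. replace (2 * t * (Rmax (- g i) 0 * d i)) with (2 * t * d i * Rmax (- g i) 0) by ring.
      apply pt_dir; lra. }
    assert (E2 : rsum m (fun i => Rmax (- g i) 0 ^ 2 - 2 * t * (us i * d i) + t ^ 2 * d i ^ 2)
               = rsum m (fun i => Rmax (- g i) 0 ^ 2) - 2 * t * ip m us d + t ^ 2 * rsum m (fun i => d i ^ 2)).
    { rewrite rsum_plus, rsum_minus, !rsum_scal. unfold ip. ring. }
    fold g in Hmin.
    assert (t * ip m us d <= t * (t * (/ 2 * rsum m (fun i => d i ^ 2)))) by nra.
    apply Rmult_le_reg_l with t; lra. }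
  assert (HFge : ip m us g <= Fobj m w lam sigma c us).
  { apply F_ge; auto. apply df_bdd; auto. }
  assert (Hd : ip m us g' = ip m us g + ip m us d).
  { unfold ip, d. rewrite <- rsum_plus. apply rsum_ext; intros; ring. }
  assert (HF : Fobj m w lam sigma c us = ip m us g) by (fold g' in HF'; lra).
  unfold Gobj. rewrite HF, Dobj_as. fold g.
  pose proof (Lsum_at m us g (fun i _ => Hus i)). lra.
Qed.

Lemma Fobj_ext m w lam sigma c u u' : (0 < m)%nat ->
  (forall i, (i < m)%nat -> u i = u' i) -> Fobj m w lam sigma c u = Fobj m w lam sigma c u'.
Proof.
  intros Hm H. unfold Fobj.
  rewrite (rsum_ext m (fun i => u i * c i) (fun i => u' i * c i)) by (intros; rewrite H; auto).
  rewrite (vmax_ext m u u') by auto.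
  rewrite (rsum_ext m (fun i => rsum m (fun j => w i j * Rabs (u i - u j)))
                      (fun i => rsum m (fun j => w i j * Rabs (u' i - u' j)))); auto.
  intros i Hi; apply rsum_ext; intros j Hj; rewrite !H; auto.
Qed.

Lemma sqnorm_ext m u u' : (forall i, (i < m)%nat -> u i = u' i) -> sqnorm m u = sqnorm m u'.
Proof. intros H. unfold sqnorm. apply rsum_ext; intros; rewrite H; auto. Qed.

Lemma Gobj_ext m w lam sigma c u u' : (0 < m)%nat ->
  (forall i, (i < m)%nat -> u i = u' i) -> Gobj m w lam sigma c u = Gobj m w lam sigma c u'.
Proof. intros. unfold Gobj. rewrite (Fobj_ext m w lam sigma c u u'), (sqnorm_ext m u u'); auto. Qed.

Lemma Dobj_ext m w lam sigma c a a' v v' :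
  (forall i j, (i < m)%nat -> (j < m)%nat -> a i j = a' i j) ->
  (forall i, (i < m)%nat -> v i = v' i) ->
  Dobj m w lam sigma c a v = Dobj m w lam sigma c a' v'.
Proof.
  intros Ha Hv. unfold Dobj. f_equal. apply sqnorm_ext. intros i Hi.
  unfold dual_point, projpos, Aop. rewrite Hv by auto.
  rewrite (rsum_ext m (fun j => w i j * (a i j - a j i)) (fun j => w i j * (a' i j - a' j i))); auto.
  intros j Hj. rewrite !Ha; auto.
Qed.

Lemma Fobj_hom m w lam sigma c x t : 0 <= t ->
  Fobj m w lam sigma c (fun i => t * x i) = t * Fobj m w lam sigma c x.
Proof.
  intros Ht. unfold Fobj. rewrite vmax_scale by auto.
  rewrite (rsum_ext m (fun i => t * x i * c i) (fun i => t * (x i * c i))) by (intros; ring).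
  rewrite rsum_scal.
  rewrite (rsum_ext m (fun i => rsum m (fun j => w i j * Rabs (t * x i - t * x j)))
                      (fun i => t * rsum m (fun j => w i j * Rabs (x i - x j)))).
  - rewrite rsum_scal. ring.
  - intros i Hi. rewrite <- rsum_scal. apply rsum_ext; intros j Hj.
    rewrite <- Rmult_minus_distr_l, Rabs_mult, (Rabs_pos_eq t) by auto. ring.
Qed.

Lemma sqnorm_hom m x t : sqnorm m (fun i => t * x i) = t ^ 2 * sqnorm m x.
Proof. unfold sqnorm. rewrite <- rsum_scal. apply rsum_ext; intros; ring. Qed.

Lemma Gobj_hom m w lam sigma c x t : 0 <= t ->
  Gobj m w lam sigma c (fun i => t * x i) = t * Fobj m w lam sigma c x + / 2 * t ^ 2 * sqnorm m x.
Proof. intros. unfold Gobj. rewrite Fobj_hom, sqnorm_hom by auto. ring. Qed.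

Lemma sqnorm_nonneg m x : 0 <= sqnorm m x.
Proof. unfold sqnorm. apply rsum_nonneg; intros; apply pow2_ge_0. Qed.

Lemma ball_sq m u : norm2 m u <= 1 -> sqnorm m u <= 1.
Proof.
  intros H. unfold norm2 in H. pose proof (sqnorm_nonneg m u).
  rewrite <- (sqrt_sqrt (sqnorm m u)) by auto. pose proof (sqrt_pos (sqnorm m u)). nra.
Qed.

Lemma nnscale m t x : 0 <= t -> nonneg_vec m x -> nonneg_vec m (fun i => t * x i).
Proof. intros Ht Hx i Hi. apply Rmult_le_pos; auto. Qed.

Lemma part3a m w lam sigma c x0 : (0 < m)%nat -> nonneg_vec m x0 ->
  (forall u, nonneg_vec m u -> Gobj m w lam sigma c x0 <= Gobj m w lam sigma c u) ->
  (exists i, (i < m)%nat /\ x0 i <> 0) ->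
  ball_min m w lam sigma c (fun i => x0 i / norm2 m x0).
Proof.
  intros Hm Hx Hmin [k [Hk Hk0]].
  set (F := Fobj m w lam sigma c x0). set (B := sqnorm m x0).
  assert (HB : 0 < B).
  { apply Rlt_le_trans with (x0 k ^ 2).
    - assert (0 < x0 k * x0 k) by (apply Rsqr_pos_lt; auto). simpl; lra.
    - unfold B, sqnorm. apply (rsum_ge_term m (fun i => x0 i ^ 2)); auto. intros; apply pow2_ge_0. }
  assert (HG0 : Gobj m w lam sigma c x0 = F + / 2 * B) by auto.
  assert (Hs : forall s, 0 <= s -> F + / 2 * B <= s * F + / 2 * s ^ 2 * B).
  { intros s Hs. rewrite <- HG0. apply Rle_trans with (Gobj m w lam sigma c (fun i => s * x0 i)).
    - apply Hmin. apply nnscale; auto.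
    - rewrite Gobj_hom by auto. unfold F, B. lra. }
  assert (HFB : F = - B).
  { destruct (Rle_dec 0 F) as [h|h].
    - specialize (Hs 0 (Rle_refl 0)). simpl in Hs. lra.
    - apply Rnot_le_lt in h. assert (0 <= - F / B) by (apply Rmult_le_pos; [lra| left; apply Rinv_0_lt_compat; auto]).
      specialize (Hs (- F / B) H).
      replace (- F / B * F + / 2 * (- F / B) ^ 2 * B) with (- / 2 * (F * F / B)) in Hs by (field; lra).
      assert (F + / 2 * B + / 2 * (F * F / B) <= 0) by lra.
      assert ((F + B) ^ 2 / (2 * B) <= 0).
      { replace ((F + B) ^ 2 / (2 * B)) with (F + / 2 * B + / 2 * (F * F / B)) by (field; lra). auto. }
      assert (0 <= (F + B) ^ 2 / (2 * B)).
      { apply Rmult_le_pos; [apply pow2_ge_0| left; apply Rinv_0_lt_compat; lra]. }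
      assert ((F + B) ^ 2 = 0).
      { assert ((F + B) ^ 2 / (2 * B) = 0) by lra.
        apply Rmult_integral in H3. destruct H3; auto.
        exfalso. pose proof (Rinv_0_lt_compat (2 * B)). lra. }
      simpl in H3. apply Rmult_integral in H3. destruct H3 as [h3|h3]; lra. }
  set (r := norm2 m x0).
  assert (Hr2 : r * r = B) by (unfold r, norm2; apply sqrt_sqrt; lra).
  assert (Hr : 0 < r) by (unfold r, norm2; apply sqrt_lt_R0; auto).
  replace (fun i => x0 i / r) with (fun i => / r * x0 i)
    by (apply functional_extensionality; intros; unfold r, Rdiv; ring).
  assert (Hir : 0 < / r) by (apply Rinv_0_lt_compat; auto).
  split; [split|].
  - apply nnscale; auto; lra.
  - unfold norm2. rewrite sqnorm_hom. fold B.
    replace ((/ r) ^ 2 * B) with 1 by (rewrite <- Hr2; field; lra). rewrite sqrt_1. lra.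
  - intros u Hu Hu1. rewrite Fobj_hom by lra. fold F. rewrite HFB.
    pose proof (ball_sq m u Hu1) as Hq. pose proof (sqnorm_nonneg m u).
    specialize (Hs 0 (Rle_refl 0)).
    pose proof (Hmin _ (nnscale m r u (Rlt_le _ _ Hr) Hu)) as Hru.
    rewrite Gobj_hom in Hru by lra. rewrite HG0 in Hru.
    set (Fu := Fobj m w lam sigma c u) in *. set (q := sqnorm m u) in *.
    simpl in Hru. replace (r * (r * 1)) with B in Hru by (rewrite <- Hr2; ring). assert (r * Fu >= - (r * r)) by (rewrite Hr2; nra).
    assert (Fu >= - r) by nra.
    replace (/ r * - B) with (- r) by (rewrite <- Hr2; field; lra). lra.
Qed.

Lemma part3b m w lam sigma c x0 : (0 < m)%nat -> nonneg_vec m x0 ->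
  (forall u, nonneg_vec m u -> Gobj m w lam sigma c x0 <= Gobj m w lam sigma c u) ->
  (forall i, (i < m)%nat -> x0 i = 0) ->
  ball_min m w lam sigma c (fun _ => 0).
Proof.
  intros Hm Hx Hmin Hz.
  replace (fun _ : nat => 0) with (fun i => 0 * x0 i) by (apply functional_extensionality; intros; ring).
  assert (HG : Gobj m w lam sigma c x0 = 0).
  { rewrite (Gobj_ext m w lam sigma c x0 (fun i => 0 * x0 i)) by (auto; intros; rewrite Hz; auto; ring).
    rewrite Gobj_hom by lra. ring. }
  split; [split|].
  - apply nnscale; auto; lra.
  - unfold norm2. rewrite sqnorm_hom. replace (0 ^ 2 * sqnorm m x0) with 0 by ring.
    rewrite sqrt_0. lra.
  - intros u Hu Hu1. rewrite Fobj_hom by lra.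
    pose proof (ball_sq m u Hu1) as Hq. pose proof (sqnorm_nonneg m u).
    set (Fu := Fobj m w lam sigma c u) in *. set (q := sqnorm m u) in *.
    destruct (Rle_dec 0 Fu) as [h|h]; [lra|]. apply Rnot_le_lt in h.
    pose proof (Hmin _ (nnscale m (- Fu) u ltac:(lra) Hu)) as Hru.
    rewrite Gobj_hom in Hru by lra. rewrite HG in Hru. fold Fu q in Hru.
    simpl in Hru. nra.
Qed.

Lemma max_sq_mono x y : x <= y -> Rmax (- y) 0 ^ 2 <= Rmax (- x) 0 ^ 2.
Proof.
  intros H. unfold Rmax. destruct (Rle_dec (- y) 0); destruct (Rle_dec (- x) 0).
  - lra.
  - pose proof (pow2_ge_0 x). simpl; nra.
  - apply Rnot_le_lt in n. lra.
  - apply Rnot_le_lt in n. apply Rnot_le_lt in n0. simpl; nra.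
Qed.
Definition alph (m : nat) (z : nat -> R) : nat -> nat -> R :=
  fun i j => (z (i * m + j)%nat - z (j * m + i)%nat) / 2.
Definition Sv (m : nat) (z : nat -> R) : R := rsum m (fun k => Rabs (z (m * m + k)%nat)).
Definition vv (m : nat) (z : nat -> R) : nat -> R :=
  fun i => Rabs (z (m * m + i)%nat) / Rmax 1 (Sv m z).
Definition Phi m w lam sigma c (z : nat -> R) : R :=
  Dobj m w lam sigma c (alph m z) (vv m z).

Definition box (N : nat) (z : nat -> R) : Prop :=
  forall k, (k < N)%nat -> -1 <= z k <= 1.

Lemma Phi_ext m w lam sigma c z z' :
  (forall k, (k < m * m + m)%nat -> z k = z' k) ->
  Phi m w lam sigma c z = Phi m w lam sigma c z'.
Proof.
  intros H. unfold Phi. apply Dobj_ext.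
  - intros i j Hi Hj. unfold alph. rewrite !H by nia. reflexivity.
  - intros i Hi. unfold vv, Sv. rewrite H by nia.
    rewrite (rsum_ext m (fun k => Rabs (z (m * m + k)%nat)) (fun k => Rabs (z' (m * m + k)%nat))).
    + reflexivity.
    + intros k Hk. rewrite H by nia. reflexivity.
Qed.

Lemma box_feas m z : box (m * m + m) z -> dual_feasible m (alph m z) /\ rsimp m (vv m z).
Proof.
  intros Hz. split.
  - intros i j Hi Hj. unfold alph. split.
    + pose proof (Hz (i * m + j)%nat ltac:(nia)). pose proof (Hz (j * m + i)%nat ltac:(nia)).
      unfold Rabs; destruct Rcase_abs; lra.
    + field.
  - assert (HM : 1 <= Rmax 1 (Sv m z)) by apply Rmax_l.
    assert (HS : Sv m z <= Rmax 1 (Sv m z)) by apply Rmax_r.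
    split.
    + intros i Hi. unfold vv. apply Rmult_le_pos; [apply Rabs_pos| left; apply Rinv_0_lt_compat; lra].
    + unfold vv. unfold Rdiv.
      rewrite (rsum_ext m (fun i => Rabs (z (m * m + i)%nat) * / Rmax 1 (Sv m z))
                          (fun i => / Rmax 1 (Sv m z) * Rabs (z (m * m + i)%nat))) by (intros; ring).
      rewrite rsum_scal. fold (Sv m z).
      apply Rmult_le_reg_l with (Rmax 1 (Sv m z)); [lra|].
      rewrite <- Rmult_assoc, Rinv_r by lra. lra.
Qed.

Lemma divmod_helper m i j : (j < m)%nat -> ((i * m + j) / m = i /\ (i * m + j) mod m = j)%nat.
Proof.
  intros Hj. split.
  - symmetry. apply (Nat.div_unique _ _ _ j); auto. lia.
  - symmetry. apply (Nat.mod_unique _ _ i j); auto. lia.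
Qed.

Lemma feas_box m w lam sigma c a v : (0 < m)%nat -> dual_feasible m a -> rsimp m v ->
  exists z, box (m * m + m) z /\ Phi m w lam sigma c z = Dobj m w lam sigma c a v.
Proof.
  intros Hm Ha [Hv Hv1].
  exists (fun k => if Nat.ltb k (m * m) then a (k / m)%nat (k mod m)%nat else v (k - m * m)%nat).
  split.
  - intros k Hk. destruct (Nat.ltb k (m * m)) eqn:E.
    + apply Nat.ltb_lt in E.
      assert (k / m < m)%nat by (apply Nat.Div0.div_lt_upper_bound; lia).
      assert (k mod m < m)%nat by (apply Nat.mod_upper_bound; lia).
      destruct (Ha (k / m)%nat (k mod m)%nat H H0) as [H1 _].
      unfold Rabs in H1; destruct Rcase_abs; lra.
    + apply Nat.ltb_ge in E.
      assert (0 <= v (k - m * m)%nat) by (apply Hv; lia).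
      assert (v (k - m * m)%nat <= rsum m v) by (apply rsum_ge_term; auto; lia). lra.
  - unfold Phi. apply Dobj_ext.
    + intros i j Hi Hj. unfold alph.
      destruct (divmod_helper m i j Hj) as [E1 E2]. destruct (divmod_helper m j i Hi) as [E3 E4].
      assert (L1 : Nat.ltb (i * m + j) (m * m) = true) by (apply Nat.ltb_lt; nia).
      assert (L2 : Nat.ltb (j * m + i) (m * m) = true) by (apply Nat.ltb_lt; nia).
      rewrite L1, L2, E1, E2, E3, E4. destruct (Ha i j Hi Hj) as [_ Hanti]. rewrite Hanti. field.
    + intros i Hi. unfold vv, Sv.
      assert (L : forall k, (k < m)%nat -> Nat.ltb (m * m + k) (m * m) = false) by (intros; apply Nat.ltb_ge; lia).
      assert (S : forall k, (k < m)%nat -> (m * m + k - m * m = k)%nat) by (intros; lia).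
      rewrite L, S by auto.
      rewrite (rsum_ext m _ v).
      * rewrite Rmax_left by lra. rewrite Rabs_pos_eq by (apply Hv; auto). field.
      * intros k Hk. rewrite L, S by auto. apply Rabs_pos_eq. apply Hv; auto.
Qed.

From mathcomp Require all_boot all_order all_algebra.
From mathcomp Require all_classical all_reals all_analysis Rstruct Rstruct_topology.

Module MC.
Import all_boot all_order all_algebra all_classical all_reals all_analysis Rstruct Rstruct_topology.
Import Order.TTheory GRing.Theory Num.Theory.
Local Open Scope ring_scope.
Local Open Scope classical_set_scope.

Definition zf N (r : 'rV[R]_N) (k : nat) : R :=
  match (insub k : option 'I_N) with Some i => r ord0 i | None => 0%R end.

Arguments zf {N}.
Definition CC N (Phi : (nat -> R) -> R) := continuous (fun r : 'rV[R]_N => Phi (zf r)).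

Lemma CC_const N a : CC N (fun _ => a).
Proof. exact: cst_continuous. Qed.

Lemma CC_coord N k : CC N (fun z => z k).
Proof.
rewrite /CC /zf; case: insubP => [i _ _|_]; last exact: cst_continuous.
exact: (@coord_continuous R 1 N ord0 i).
Qed.

Lemma CC_plus N f g : CC N f -> CC N g -> CC N (fun z => Rplus (f z) (g z)).
Proof. move=> cf cg x; exact: (@continuousD R R^o _ _ _ x (cf x) (cg x)). Qed.

Lemma CC_mult N f g : CC N f -> CC N g -> CC N (fun z => Rmult (f z) (g z)).
Proof. move=> cf cg x; exact: (@continuousM R _ _ _ x (cf x) (cg x)). Qed.

Lemma CC_opp N f : CC N f -> CC N (fun z => Ropp (f z)).
Proof. move=> cf x; exact: (@continuousN R R^o _ _ x (cf x)). Qed.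

Lemma CC_ext N f g : (forall z, f z = g z) -> CC N f -> CC N g.
Proof. by move=> e; have -> : g = f by apply: funext => z; rewrite e. Qed.

Lemma CC_max N f g : CC N f -> CC N g -> CC N (fun z => Rmax (f z) (g z)).
Proof.
move=> cf cg x.
have -> : (fun r : 'rV[R]_N => Rmax (f (zf r)) (g (zf r))) =
   ((fun r => f (zf r)) \max (fun r => g (zf r))).
  by apply: funext => r /=; rewrite RmaxE.
exact: (continuous_max (cf x) (cg x)).
Qed.

Lemma CC_abs N f : CC N f -> CC N (fun z => Rabs (f z)).
Proof.
move=> cf; apply: (@CC_ext N (fun z => Rmax (f z) (Ropp (f z)))).
  move=> z; rewrite /Rmax /Rabs; case: Rle_dec; case: Rcase_abs => /=; lra.
by apply: CC_max => //; apply: CC_opp.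
Qed.

Lemma CC_inv N f : (forall z, f z <> 0%coqR) -> CC N f -> CC N (fun z => Rinv (f z)).
Proof.
move=> nz cf x. apply: continuousV; last exact: cf.
by apply/eqP; apply: nz.
Qed.

Lemma CC_min N Phi : CC N Phi ->
  (forall z z', (forall k, (k < N)%coq_nat -> z k = z' k) -> Phi z = Phi z') ->
  exists z0, box N z0 /\ forall z, box N z -> (Phi z0 <= Phi z)%coqR.
Proof.
move=> cP ext.
pose A := [set v : 'rV[R]_N | forall i, (fun _ : 'I_N => `[-1%R, 1%R]) i (v ord0 i)].
have cA : compact A by apply: rV_compact => i; exact: segment_compact.
have A0 : A !=set0.
  exists 0 => i /=; rewrite mxE /= in_itv /=; apply/andP; split => //.
have [c cA' cmin] := EVT_min_rV A0 cA (continuous_subspaceT cP).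
have zfi : forall (r : 'rV[R]_N) (i : 'I_N), zf r i = r ord0 i.
  by move=> r i; rewrite /zf valK.
exists (zf c); split.
  move=> k kN; have kN' : (k < N)%N by apply/ssrnat.ltP.
  have := set_mem cA' (Ordinal kN').
  rewrite /= in_itv /= => /andP [h1 h2].
  rewrite (_ : k = nat_of_ord (Ordinal kN')) // zfi.
  by split; apply/RleP.
move=> z bz.
pose r := \row_(i < N) z i.
have -> : Phi z = Phi (zf r).
  apply: ext => k kN; have kN' : (k < N)%N by apply/ssrnat.ltP.
  rewrite (_ : k = nat_of_ord (Ordinal kN')) // zfi mxE //.
apply/RleP; apply: cmin; apply: mem_set => i /=.
rewrite mxE in_itv /=; have [h1 h2] := bz i (elimT ssrnat.ltP (ltn_ord i)).
by apply/andP; split; apply/RleP.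
Qed.
End MC.

Open Scope R_scope.

Lemma CC_rsum N n f : (forall i, MC.CC N (f i)) -> MC.CC N (fun z => rsum n (fun i => f i z)).
Proof. intros H; induction n; simpl; [apply MC.CC_const| apply MC.CC_plus; auto]. Qed.

Lemma CC_minus N f g : MC.CC N f -> MC.CC N g -> MC.CC N (fun z => f z - g z).
Proof. intros Hf Hg. exact (MC.CC_plus N f (fun z => - g z) Hf (MC.CC_opp N g Hg)). Qed.

Lemma CC_div N f g : MC.CC N f -> MC.CC N g -> (forall z, 1 <= g z) -> MC.CC N (fun z => f z / g z).
Proof.
  intros Hf Hg H1. apply (MC.CC_mult N f (fun z => / g z)); auto.
  apply MC.CC_inv; auto. intros z Hz; specialize (H1 z). lra.
Qed.

Lemma CC_pow2 N f : MC.CC N f -> MC.CC N (fun z => f z ^ 2).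
Proof.
  intros H. exact (MC.CC_mult N f (fun z => f z * 1) H (MC.CC_mult N f (fun _ => 1) H (MC.CC_const N 1))).
Qed.

Lemma Phi_CC m w lam sigma c : MC.CC (m * m + m) (Phi m w lam sigma c).
Proof.
  unfold Phi, Dobj, sqnorm, dual_point, projpos, Aop, alph, vv, Sv.
  apply MC.CC_mult. apply MC.CC_const.
  apply CC_rsum; intro i. apply CC_pow2. apply MC.CC_max; [|apply MC.CC_const].
  apply CC_minus. apply CC_minus. apply MC.CC_const.
  apply MC.CC_mult. apply MC.CC_const.
  apply CC_rsum; intro j. apply MC.CC_mult. apply MC.CC_const.
  apply CC_minus.
  - apply CC_div. apply CC_minus. apply MC.CC_coord. apply MC.CC_coord.
    apply MC.CC_const. intros; lra.
  - apply CC_div. apply CC_minus. apply MC.CC_coord. apply MC.CC_coord.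
    apply MC.CC_const. intros; lra.
  - apply MC.CC_mult. apply MC.CC_const. apply CC_div.
    + apply MC.CC_abs. apply MC.CC_coord.
    + apply MC.CC_max. apply MC.CC_const. apply CC_rsum; intro k. apply MC.CC_abs. apply MC.CC_coord.
    + intros; apply Rmax_l.
Qed.

Lemma dual_min_exists m w lam sigma c : (0 < m)%nat ->
  exists a v, dual_feasible m a /\ rsimp m v /\
    forall a' v', dual_feasible m a' -> rsimp m v' ->
      Dobj m w lam sigma c a v <= Dobj m w lam sigma c a' v'.
Proof.
  intros Hm.
  destruct (MC.CC_min (m * m + m) (Phi m w lam sigma c) (Phi_CC m w lam sigma c)
     (fun z z' H => Phi_ext m w lam sigma c z z' H)) as [z0 [Hz0 Hmin]].
  exists (alph m z0), (vv m z0). destruct (box_feas m z0 Hz0) as [H1 H2].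
  split; auto. split; auto. intros a' v' Ha' Hv'.
  destruct (feas_box m w lam sigma c a' v' Hm Ha' Hv') as [z [Hz Hze]].
  rewrite <- Hze. apply (Hmin z Hz).
Qed.

Theorem mainTheorem6 (m : nat) (w : nat -> nat -> R) (lam sigma : R) (c : nat -> R)
  (Hm : (0 < m)%nat)
  (Hsym : forall i j, (i < m)%nat -> (j < m)%nat -> w i j = w j i)
  (Hwnn : forall i j, (i < m)%nat -> (j < m)%nat -> 0 <= w i j)
  (Hlam : 0 <= lam) (Hsigma : 0 <= sigma) :
  (* 1. duality: both minima are attained and min primal = - min dual *)
  (exists u0, nonneg_vec m u0 /\
     (forall u, nonneg_vec m u -> Gobj m w lam sigma c u0 <= Gobj m w lam sigma c u) /\
   exists a0 v0, dual_feasible m a0 /\ simplex m v0 /\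
     (forall a v, dual_feasible m a -> simplex m v ->
        Dobj m w lam sigma c a0 v0 <= Dobj m w lam sigma c a v) /\
     Gobj m w lam sigma c u0 = - Dobj m w lam sigma c a0 v0)
  /\
  (forall a0 v0, dual_feasible m a0 -> simplex m v0 ->
     (forall a v, dual_feasible m a -> simplex m v ->
        Dobj m w lam sigma c a0 v0 <= Dobj m w lam sigma c a v) ->
     let us := dual_point m w lam sigma c a0 v0 in
     (* 2. us is the unique minimizer of F + 1/2||.||^2 over R^m_+ *)
     (nonneg_vec m us /\
      (forall u, nonneg_vec m u -> Gobj m w lam sigma c us <= Gobj m w lam sigma c u) /\
      (forall u, nonneg_vec m u ->
         (forall u', nonneg_vec m u' -> Gobj m w lam sigma c u <= Gobj m w lam sigma c u') ->
         forall i, (i < m)%nat -> u i = us i)) /\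
     (* 3. normalized us minimizes F over the unit ball of R^m_+ *)
     ((exists i, (i < m)%nat /\ us i <> 0) ->
        ball_min m w lam sigma c (fun i => us i / norm2 m us)) /\
     ((forall i, (i < m)%nat -> us i = 0) ->
        ball_min m w lam sigma c (fun _ => 0))).
Proof.
  destruct (dual_min_exists m w lam sigma c Hm) as [as0 [vs [Has [Hvs Hmin]]]].
  set (ust := dual_point m w lam sigma c as0 vs).
  assert (Hsad : Gobj m w lam sigma c ust = - Dobj m w lam sigma c as0 vs)
    by (apply saddle; auto).
  assert (Hustnn : nonneg_vec m ust)
    by (intros i Hi; unfold ust, dual_point, projpos; apply Rmax_r).
  set (v0 := fun i => vs i + (if Nat.eq_dec i 0 then 1 - rsum m vs else 0)).
  assert (Hv0 : simplex m v0).
  { destruct Hvs as [Hvs1 Hvs2]. split.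
    - intros i Hi. unfold v0. specialize (Hvs1 i Hi). destruct Nat.eq_dec; lra.
    - unfold v0. rewrite rsum_plus, rsum_delta by auto. ring. }
  assert (HD0 : Dobj m w lam sigma c as0 v0 = Dobj m w lam sigma c as0 vs).
  { apply Rle_antisym.
    - rewrite !Dobj_as. apply Rmult_le_compat_l; [lra|]. apply rsum_le; intros i Hi.
      apply max_sq_mono. unfold gv, v0. destruct Hvs as [_ Hvs2].
      destruct Nat.eq_dec.
      + assert (0 <= sigma * (1 - rsum m vs)) by (apply Rmult_le_pos; lra). nra.
      + lra.
    - apply Hmin; auto. apply simp_rsimp; auto. }
  assert (Hopt : forall u, nonneg_vec m u -> Gobj m w lam sigma c ust <= Gobj m w lam sigma c u).
  { intros u Hu. rewrite Hsad, <- HD0. apply WD; auto. apply df_bdd; auto. apply simp_rsimp; auto. }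
  assert (Hdopt : forall a v, dual_feasible m a -> simplex m v ->
            Dobj m w lam sigma c as0 v0 <= Dobj m w lam sigma c a v).
  { intros a v Ha Hv.
    pose proof (WD m w lam sigma c a v ust Hm Hsym Hwnn Hlam Hsigma Hustnn (df_bdd m a Ha) (simp_rsimp m v Hv)).
    lra. }
  split.
  { exists ust. split; auto. split; auto. exists as0, v0. split; auto. split; auto. split; auto. lra. }
  intros a0 v1 Ha0 Hv1 Hmin1 us.
  assert (HDeq : Dobj m w lam sigma c a0 v1 = Dobj m w lam sigma c as0 v0).
  { apply Rle_antisym; [apply Hmin1; auto| apply Hdopt; auto]. }
  assert (Huniq : forall u, nonneg_vec m u -> Gobj m w lam sigma c u <= - Dobj m w lam sigma c a0 v1 ->
                  forall i, (i < m)%nat -> u i = us i).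
  { intros u Hu HG i Hi. unfold us. rewrite dp_eq.
    apply (Lsum_eq m u (gv m w lam sigma c a0 v1)); auto.
    pose proof (F_ge m w lam sigma c a0 v1 u Hm Hsym Hwnn Hlam Hsigma Hu (df_bdd m a0 Ha0) (simp_rsimp m v1 Hv1)).
    rewrite Dobj_as in HG. unfold Gobj in HG. lra. }
  assert (Hust_us : forall i, (i < m)%nat -> ust i = us i).
  { apply Huniq; auto. lra. }
  assert (Husmin : forall u, nonneg_vec m u -> Gobj m w lam sigma c us <= Gobj m w lam sigma c u).
  { intros u Hu. rewrite <- (Gobj_ext m w lam sigma c ust us Hm Hust_us). apply Hopt; auto. }
  assert (Husnn : nonneg_vec m us) by (intros i Hi; unfold us, dual_point, projpos; apply Rmax_r).
  split.
  - split; auto. split; auto. intros u Hu Hmu i Hi. apply Huniq; auto.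
    specialize (Hmu ust Hustnn). lra.
  - split.
    + intros Hex. apply part3a; auto.
    + intros Hz. apply (part3b m w lam sigma c us); auto.
Qed.
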